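(* Let $k$ be a domain, $R = k[X_0,\dots,X_m]/J$ a graded domain with $X_0,\dots,X_m$ variables of positive integer weights $A_0,\dots,A_m$ and $J$ a homogeneous ideal, let $A=\operatorname{lcm}(A_0,\dots,A_m)$ and $I=R_{\ge mA}$. Let $p\ge 2$ be an integer. If $I^{p-1}=R_{\ge (p-1)mA}$, then $I^p = R_{\ge pmA}$.
   Context: $R$ is $\mathbb N$-graded via $\deg X_i=A_i$, and $X_i$ also denotes its image in $R$. For a nonnegative integer $\alpha$, $R_{\ge\alpha}$ denotes the ideal of $R$ generated by all homogeneous elements of degree at least $\alpha$. *)

(* Defs.v *)
From HB Require Import structures.
From mathcomp Require Import all_boot all_order all_algebra.
From mathcomp Require Import mpoly.
Set Implicit Arguments. Unset Strict Implicit. Unset Printing Implicit Defensive.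
Import Order.TTheory GRing.Theory.
Local Open Scope ring_scope.

Section Ideals.
Variable R : comNzRingType.

Definition ideal_gen (G : R -> Prop) : R -> Prop :=
  fun x => exists (n : nat) (c g : 'I_n -> R),
    (forall i, G (g i)) /\ x = \sum_(i < n) c i * g i.

Definition ideal_mul (I1 I2 : R -> Prop) : R -> Prop :=
  ideal_gen (fun x => exists a b, I1 a /\ I2 b /\ x = a * b).

Definition ideal_pow (I : R -> Prop) (n : nat) : R -> Prop :=
  iter n (ideal_mul I) (ideal_gen (fun x => x = 1)).

Definition ideal_eq (I1 I2 : R -> Prop) : Prop := forall x, I1 x <-> I2 x.
End Ideals.

Section Weighted.
Variables (k : nzRingType) (n : nat) (A : 'I_n -> nat).

Definition wdeg (mon : 'X_{1..n}) : nat := (\sum_(i < n) A i * mon i)%N.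

Definition whomog (d : nat) (f : {mpoly k[n]}) : Prop :=
  forall mon, mon \in msupp f -> wdeg mon = d.

Definition wcomp (d : nat) (f : {mpoly k[n]}) : {mpoly k[n]} :=
  \sum_(mon <- msupp f | wdeg mon == d) f@_mon *: 'X_[mon].
End Weighted.

(* For a graded quotient pi : k[X] ->> R (grading induced by the weights A):
   R_{>= alpha} = ideal of R generated by all homogeneous elements of degree >= alpha;
   the homogeneous elements of R of degree d are the images of the homogeneous
   polynomials of weighted degree d. *)
Definition Rge (k : nzRingType) (n : nat) (A : 'I_n -> nat) (R : comNzRingType)
  (pi : {mpoly k[n]} -> R) (alpha : nat) : R -> Prop :=
  ideal_gen (fun x => exists (d : nat) (f : {mpoly k[n]}),
                (alpha <= d)%N /\ whomog A d f /\ x = pi f).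

(* Main.v *)
Require Import Defs.
From HB Require Import structures.
From mathcomp Require Import all_boot all_order all_algebra.
From mathcomp Require Import mpoly.
From mathcomp Require Import zify.
Section Comb.
Variables (n' : nat).
Local Notation n := (n'.+1).
Variables (A : 'I_n -> nat) (Al : nat).
Hypothesis Al_gt0 : (0 < Al)%N.
Hypothesis dvdA : forall i, (A i %| Al)%N.

Definition wd (a : 'I_n -> nat) : nat := (\sum_(i < n) A i * a i)%N.

Lemma wdD (a b : 'I_n -> nat) : wd (fun i => a i + b i)%N = (wd a + wd b)%N.
Proof. by rewrite /wd -big_split /=; apply: eq_bigr => i _; rewrite mulnDr. Qed.

Lemma wd_le (a b : 'I_n -> nat) : (forall i, a i <= b i)%N -> (wd a <= wd b)%N.
Proof. by move=> H; apply: leq_sum => i _; rewrite leq_mul2l H orbT. Qed.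

Lemma block_exists (a : 'I_n -> nat) : (n * (Al - 1) < wd a)%N ->
  exists i, (Al <= A i * a i)%N.
Proof.
move=> H; case: (boolP [exists i, Al <= A i * a i]) => [/existsP //| /existsPn Hn]; exfalso.
have : (wd a <= n * (Al - 1))%N.
  rewrite /wd -[X in (_ <= X * _)%N]card_ord -sum_nat_const.
  apply: leq_sum => i _; move: (Hn i); rewrite -ltnNge; lia.
by rewrite leqNgt H.
Qed.

Lemma comb t (a : 'I_n -> nat) : (t * Al + n.-1 * Al <= wd a)%N ->
  exists b : 'I_n -> nat, (forall i, b i <= a i)%N /\ wd b = (t * Al)%N.
Proof.
elim: t a => [|t IH] a H.
  by exists (fun _ => 0%N); split => //; rewrite /wd big1 // => i _; rewrite muln0.
have [i Hi] : exists i, (Al <= A i * a i)%N.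
  apply: block_exists; apply: leq_trans H; rewrite /= mulSn; nia.
pose c := (Al %/ A i)%N.
have Ac : (A i * c = Al)%N by rewrite /c mulnC divnK.
have Api : (0 < A i)%N.
  by rewrite lt0n; apply/eqP => E; move: Ac Al_gt0; rewrite E mul0n => <-.
have ca : (c <= a i)%N by rewrite -(leq_pmul2l Api) Ac.
pose e := fun j => if j == i then c else 0%N.
have we : wd e = Al.
  rewrite /wd (bigD1 i) //= big1 ?addn0 /e ?eqxx //.
  by move=> j /negbTE ->; rewrite muln0.
have ea : forall j, (e j <= a j)%N by move=> j; rewrite /e; case: eqP => // ->.
pose a' := fun j => (a j - e j)%N.
have aa : wd a = (wd a' + Al)%N.
  rewrite -we -wdD /wd; apply: eq_bigr => j _; rewrite /a' subnK //.
have [b' [Hb1 Hb2]] : exists b' : 'I_n -> nat, (forall i, b' i <= a' i)%N /\ wd b' = (t * Al)%N.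
  apply: IH; move: H; rewrite aa mulSn; lia.
exists (fun j => b' j + e j)%N; split.
  by move=> j; rewrite -(subnK (ea j)) leq_add2r.
by rewrite wdD Hb2 we mulSn addnC.
Qed.
End Comb.

Import GRing.Theory.
Local Open Scope ring_scope.

Section Id.
Variable R : comNzRingType.
Definition closedI (P : R -> Prop) :=
  [/\ P 0, (forall x y, P x -> P y -> P (x + y)) & (forall r x, P x -> P (r * x))].

Lemma gen_min (G P : R -> Prop) x : closedI P -> (forall y, G y -> P y) ->
  ideal_gen G x -> P x.
Proof.
move=> [P0 PD PM] HG [n [c [g [Hg ->]]]].
by apply: big_ind => // i _; apply: PM; apply: HG.
Qed.

Lemma gen_in (G : R -> Prop) x : G x -> ideal_gen G x.
Proof.
move=> Gx; exists 1%N, (fun _ => 1), (fun _ => x); split => //.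
by rewrite big_ord1 mul1r.
Qed.

Lemma gen_closed (G : R -> Prop) : closedI (ideal_gen G).
Proof.
split.
- exists 0%N, (fun _ => 0), (fun _ => 0); split; first by case.
  by rewrite big_ord0.
- move=> x y [n1 [c1 [g1 [Hg1 ->]]]] [n2 [c2 [g2 [Hg2 ->]]]].
  exists (n1 + n2)%N,
    (fun i => match split i with inl j => c1 j | inr j => c2 j end),
    (fun i => match split i with inl j => g1 j | inr j => g2 j end); split.
    by move=> i; case: (split i).
  rewrite big_split_ord /=; congr (_ + _); apply: eq_bigr => i _.
    by rewrite -[lshift _ _]/(unsplit (inl i)) unsplitK.
  by rewrite -[rshift _ _]/(unsplit (inr i)) unsplitK.
- move=> r x [n [c [g [Hg ->]]]].
  exists n, (fun i => r * c i), g; split => //.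
  by rewrite mulr_sumr; apply: eq_bigr => i _; rewrite mulrA.
Qed.
End Id.

Section Main.
Variables (k : idomainType) (m : nat) (A : 'I_m.+1 -> nat).
Variables (R : idomainType) (pi : {rmorphism {mpoly k[m.+1]} -> R}).

Definition Mon (al : nat) : R -> Prop :=
  fun x => exists mon : 'X_{1..m.+1}, (al <= wdeg A mon)%N /\ x = pi 'X_[mon].

Lemma RgeE al x : Rge A pi al x <-> ideal_gen (Mon al) x.
Proof.
split.
  apply: gen_min; first exact: gen_closed.
  move=> y [d [f [Hd [Hf ->]]]].
  rewrite (mpolyE f) rmorph_sum big_seq.
  have [P0 PD PM] := @gen_closed _ (Mon al).
  apply: big_ind => // mon Hmon.
  rewrite -mul_mpolyC rmorphM; apply: PM; apply: gen_in.
  by exists mon; split => //; rewrite (Hf mon Hmon).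
apply: gen_min; first exact: gen_closed.
move=> y [mon [Hmon ->]]; apply: gen_in.
exists (wdeg A mon), 'X_[mon]; split => //; split => //.
by move=> mon'; rewrite msuppX mem_seq1 => /eqP ->.
Qed.

Lemma wdegD (u v : 'X_{1..m.+1}) : wdeg A (u + v)%MM = (wdeg A u + wdeg A v)%N.
Proof.
by rewrite /wdeg -big_split /=; apply: eq_bigr => i _; rewrite mnmDE mulnDr.
Qed.

Lemma prod_mon al be a b : ideal_gen (Mon al) a -> ideal_gen (Mon be) b ->
  ideal_gen (Mon (al + be)) (a * b).
Proof.
have [P0 PD PM] := @gen_closed _ (Mon (al + be)).
move=> Ha Hb; apply: (@gen_min _ (Mon al) (fun a => ideal_gen (Mon (al + be)) (a * b)) a _ _ Ha).
  split; first by rewrite mul0r.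
    by move=> x y Hx Hy; rewrite mulrDl; apply: PD.
  by move=> r x Hx; rewrite -mulrA; apply: PM.
move=> y [u [Hu ->]]; apply: (@gen_min _ (Mon be) (fun b => ideal_gen (Mon (al + be)) (pi 'X_[u] * b)) b _ _ Hb).
  split; first by rewrite mulr0.
    by move=> x y' Hx Hy; rewrite mulrDr; apply: PD.
  by move=> r x Hx; rewrite mulrCA; apply: PM.
move=> z [v [Hv ->]]; apply: gen_in; exists (u + v)%MM; split.
  by rewrite wdegD leq_add.
by rewrite mpolyXD rmorphM.
Qed.
End Main.

Theorem mainTheorem2
  (k : idomainType) (m : nat) (A : 'I_m.+1 -> nat)
  (hA : forall i, (0 < A i)%N)
  (R : idomainType) (pi : {rmorphism {mpoly k[m.+1]} -> R})
  (pi_surj : forall x : R, exists f, pi f = x)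
  (J_homog : forall f, pi f = 0 -> forall d, pi (wcomp A d f) = 0)
  (p : nat) (hp : (2 <= p)%N) :
  let Alcm := (\big[lcmn/1%N]_(i < m.+1) A i)%N in
  let I := Rge A pi (m * Alcm) in
  ideal_eq (ideal_pow I p.-1) (Rge A pi (p.-1 * m * Alcm)) ->
  ideal_eq (ideal_pow I p) (Rge A pi (p * m * Alcm)).
Proof.
move=> Alcm I H.
have Al_gt0 : (0 < Alcm)%N.
  by rewrite /Alcm; apply: (big_ind (fun x => 0 < x)%N) => // x y; rewrite lcmn_gt0 => -> ->.
have dvdA : forall i, (A i %| Alcm)%N by move=> i; rewrite /Alcm (biglcmn_sup i).
case: p hp H => [|q] // hq H /= x.
change (ideal_mul I (ideal_pow I q) x <-> Rge A pi (q.+1 * m * Alcm) x).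
split.
  apply: gen_min; first exact: gen_closed.
  move=> y [a [b [Ha [Hb ->]]]].
  apply/RgeE.
  have -> : (q.+1 * m * Alcm = m * Alcm + q * m * Alcm)%N by rewrite mulSn mulnDl.
  apply: prod_mon; first by apply/RgeE.
  by apply/RgeE; apply/H.
move/RgeE; apply: gen_min; first exact: gen_closed.
move=> y [mon [Hmon ->]].
have Hc : (q * m * Alcm + m * Alcm <= @wd m A (fun i => mon i))%N.
  by move: Hmon; rewrite mulSn mulnDl addnC.
have [b [Hb1 Hb2]] := @comb m A Alcm Al_gt0 dvdA _ _ Hc.
pose v := [multinom b i | i < m.+1].
pose u := [multinom (mon i - b i)%N | i < m.+1].
have Emon : mon = (u + v)%MM.
  by apply/mnmP => i; rewrite mnmDE !mnmE subnK.
have wv : wdeg A v = (q * m * Alcm)%N.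
  by rewrite -Hb2 /wdeg /wd; apply: eq_bigr => i _; rewrite mnmE.
have wu : (m * Alcm <= wdeg A u)%N.
  have := @wdegD m A u v; rewrite -Emon wv => E.
  move: Hmon; rewrite E mulSn mulnDl; lia.
apply: gen_in; exists (pi 'X_[u]), (pi 'X_[v]); split.
  by apply/RgeE; apply: gen_in; exists u.
split; last by rewrite Emon mpolyXD rmorphM.
by apply/H; apply/RgeE; apply: gen_in; exists v; rewrite wv.
Qed.
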